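(* Let $R$ be a reflexive relation on $U$. The set of completely join-irreducible elements of $\mathrm{DM(RS)}$ is $\{(\{x\}^{\vartriangle\blacktriangledown},\{x\}^{\vartriangle\blacktriangle})\mid \{x\}^{\vartriangle}\text{ is completely join-irreducible in }\wp(U)^{\vartriangle}\}\ \cup\ \{(\{x\}^{\blacktriangledown},\{x\}^{\blacktriangle})\mid \{x\}^{\blacktriangle}\text{ is completely join-irreducible in }\wp(U)^{\blacktriangle}\text{ and }x\notin\mathcal S\}.$
   Context: Let $U$ be a set and $R\subseteq U\times U$ a binary relation. For $x\in U$, $R(x)=\{y\in U\mid (x,y)\in R\}$ and $\breve R(x)=\{y\in U\mid (y,x)\in R\}$. For $X\subseteq U$: $X^{\blacktriangledown}=\{x\in U\mid R(x)\subseteq X\}$, $X^{\blacktriangle}=\{x\in U\mid R(x)\cap X\neq\emptyset\}$, $X^{\triangledown}=\{x\in U\mid \breve R(x)\subseteq X\}$, $X^{\vartriangle}=\{x\in U\mid \breve R(x)\cap X\neq\emptyset\}$; thus $\{x\}^{\vartriangle}=R(x)$ and $\{x\}^{\blacktriangle}=\breve R(x)$, and composites such as $X^{\vartriangle\blacktriangledown}$ mean $(X^{\vartriangle})^{\blacktriangledown}$. $\wp(U)^{\blacktriangledown}=\{X^{\blacktriangledown}\mid X\subseteq U\}$ and similarly $\wp(U)^{\blacktriangle},\wp(U)^{\vartriangle}$, complete lattices under $\subseteq$ (joins in $\wp(U)^{\blacktriangle},\wp(U)^{\vartriangle}$ are unions). $\mathcal S=\{x\in U\mid |R(x)|=1\}$.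 $\mathrm{RS}=\{(X^{\blacktriangledown},X^{\blacktriangle})\mid X\subseteq U\}$ ordered coordinatewise; $\mathrm{DM(RS)}$ is its Dedekind–MacNeille completion, identified with $\{(A,B)\in\wp(U)^{\blacktriangledown}\times\wp(U)^{\blacktriangle}\mid A^{\vartriangle\blacktriangle}\subseteq B,\ A\cap\mathcal S=B\cap\mathcal S\}$ ordered coordinatewise, with meets $\bigwedge_i(X_i,Y_i)=(\bigcap_iX_i,(\bigcap_iY_i)^{\triangledown\blacktriangle})$ and joins $\bigvee_i(X_i,Y_i)=((\bigcup_iX_i)^{\vartriangle\blacktriangledown},\bigcup_iY_i)$. An element $j$ of a complete lattice $L$ is completely join-irreducible if $j=\bigvee S$ implies $j\in S$ for every $S\subseteq L$. *)

(* Defs.v *)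
From mathcomp Require Import all_boot.
From mathcomp Require Import boolp classical_sets.
Set Implicit Arguments. Unset Strict Implicit. Unset Printing Implicit Defensive.
Local Open Scope classical_set_scope.

Section RoughSets.
Variables (U : Type) (R : U -> U -> Prop).

(* R(x) = R x ; breve R(x) *)
Definition Rinv (x : U) : set U := [set y | R y x].

(* X^{black down} *)
Definition boxb (X : set U) : set U := [set x | R x `<=` X].
(* X^{black up} *)
Definition diab (X : set U) : set U := [set x | R x `&` X !=set0].
(* X^{white down} *)
Definition boxw (X : set U) : set U := [set x | Rinv x `<=` X].
(* X^{white up} *)
Definition diaw (X : set U) : set U := [set x | Rinv x `&` X !=set0].

Definition Ssing : set U := [set x | exists y, R x = [set y]].

(* DM(RS), as the set of pairs (A,B) described in the paper *)
Definition DMRS : set (set U * set U) :=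
  [set p | (exists X, p.1 = boxb X) /\ (exists Y, p.2 = diab Y) /\
           diab (diaw p.1) `<=` p.2 /\ p.1 `&` Ssing = p.2 `&` Ssing].

End RoughSets.

Definition pair_le (U : Type) (p q : set U * set U) : Prop :=
  p.1 `<=` q.1 /\ p.2 `<=` q.2.

Definition is_lub_in (T : Type) (L : set T) (le : T -> T -> Prop) (F : set T) (j : T) :=
  L j /\ (forall y, F y -> le y j) /\
  (forall z, L z -> (forall y, F y -> le y z) -> le j z).

Definition cji (T : Type) (L : set T) (le : T -> T -> Prop) (j : T) : Prop :=
  L j /\ forall F : set T, F `<=` L -> is_lub_in L le F j -> F j.

(* Main.v *)
Require Import Defs.
From mathcomp Require Import all_boot.
From mathcomp Require Import boolp classical_sets.
Local Open Scope classical_set_scope.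

Lemma sE T (A B : set T) : A `<=` B -> B `<=` A -> A = B.
Proof. by move=> h1 h2; apply/seteqP; split. Qed.

Lemma boxb_mono {U} {R : U -> U -> Prop} X Y : X `<=` Y -> boxb R X `<=` boxb R Y.
Proof. by move=> h x hx w /hx /h. Qed.
Lemma diab_mono {U} {R : U -> U -> Prop} X Y : X `<=` Y -> diab R X `<=` diab R Y.
Proof. by move=> h x [w [h1 h2]]; exists w; split => //; apply: h. Qed.
Lemma diaw_mono {U} {R : U -> U -> Prop} X Y : X `<=` Y -> diaw R X `<=` diaw R Y.
Proof. by move=> h x [w [h1 h2]]; exists w; split => //; apply: h. Qed.
Lemma unit_ {U} {R : U -> U -> Prop} X : X `<=` boxb R (diaw R X).
Proof. by move=> x hx w hw; exists x. Qed.
Lemma counit {U} {R : U -> U -> Prop} X : diaw R (boxb R X) `<=` X.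
Proof. by move=> w [v [hv1 hv2]]; apply: hv2. Qed.
Lemma boxb_fix {U} {R : U -> U -> Prop} X : boxb R (diaw R (boxb R X)) = boxb R X.
Proof. apply: sE; [apply: boxb_mono; apply: counit | apply: unit_]. Qed.
Lemma diaw_fix {U} {R : U -> U -> Prop} X : diaw R (boxb R (diaw R X)) = diaw R X.
Proof. apply: sE; [apply: counit | apply: diaw_mono; apply: unit_]. Qed.

Lemma Ss {U} {R : U -> U -> Prop} (Rr : forall x, R x x) {x} : Ssing R x -> R x = [set x].
Proof. by move=> [y hy]; have := Rr x; rewrite hy => ->. Qed.

Lemma boxb1 {U} {R : U -> U -> Prop} (Rr : forall x, R x x) {x} : ~ Ssing R x -> boxb R [set x] = set0.
Proof.
move=> nS; apply: sE => // z hz; exfalso; apply: nS.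
have zx : z = x by apply: hz; apply: Rr.
subst z; exists x; apply: sE => w hw; first exact: hz.
by rewrite hw; apply: Rr.
Qed.

Lemma RS_in {U} {R : U -> U -> Prop} (Rr : forall x, R x x) X : DMRS R (boxb R X, diab R X).
Proof.
split; first by exists X. split; first by exists X. split.
  by apply: diab_mono; apply: counit.
apply: sE => z [hz Sz]; split => //; have Rz := Ss Rr Sz.
  by exists z; split => //; apply: hz; apply: Rr.
move: hz => [w []]; rewrite Rz => -> hw w'; rewrite Rz => -> //.
Qed.

Definition U1 {U} (F : set (set U * set U)) : set U := [set u | exists p, F p /\ p.1 u].
Definition U2 {U} (F : set (set U * set U)) : set U := [set u | exists p, F p /\ p.2 u].
Definition jn {U} (R : U -> U -> Prop) F := (boxb R (diaw R (U1 F)), U2 F).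

Lemma jn_in {U} {R : U -> U -> Prop} (Rr : forall x, R x x) F :
  F `<=` DMRS R -> DMRS R (jn R F).
Proof.
move=> FD; split; first by eexists.
split.
  exists [set v | exists q, F q /\ exists Y, q.2 = diab R Y /\ Y v].
  apply: sE => z /=.
    move=> [q [Fq q2z]]; have [_ [[Y hY] _]] := FD q Fq.
    move: q2z; rewrite hY => -[w [Rzw Yw]]; exists w; split => //.
    by exists q; split => //; exists Y.
  move=> [v [Rzv [q [Fq [Y [hY Yv]]]]]]; exists q; split => //.
  by rewrite hY; exists v.
split.
  move=> z /(diab_mono _ _ (@counit U R (diaw R (U1 F)))) [w [Rzw [v [Rvw [q [Fq q1v]]]]]].
  have [_ [_ [hq _]]] := FD q Fq.
  exists q; split => //; apply: hq; exists w; split => //; by exists v.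
apply: sE => z [hz Sz]; split => //; have Rz := Ss Rr Sz.
  have [v [Rvz [q [Fq q1v]]]] := hz z (Rr z).
  have [_ [_ [hq _]]] := FD q Fq.
  exists q; split => //; apply: hq; exists z; split; first exact: Rr.
  by exists v.
move: hz => [q [Fq q2z]].
have [_ [_ [_ hS]]] := FD q Fq.
have : (q.2 `&` Ssing R) z by [].
rewrite -hS => -[q1z _] w; rewrite Rz => ->.
exists z; split; first exact: Rr.
by exists q.
Qed.

Lemma jn_ub {U} {R : U -> U -> Prop} F q : F q -> pair_le q (jn R F).
Proof.
move=> Fq; split => z hz; last by exists q.
by apply: unit_; exists q.
Qed.

Lemma rng_lub {U} (Q : U -> U -> Prop) (F : set (set U)) :
  F `<=` range (diab Q) -> is_lub_in (range (diab Q)) (@subset U) F [set u | exists W, F W /\ W u].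
Proof.
move=> FD; split.
  exists [set v | exists W, F W /\ exists Y, diab Q Y = W /\ Y v] => //.
  apply: sE => z /=.
    move=> [v [Qzv [W [FW [Y [hY Yv]]]]]]; exists W; split => //.
    by rewrite -hY; exists v.
  move=> [W [FW Wz]]; have [Y _ hY] := FD W FW.
  move: Wz; rewrite -hY => -[w [Qzw Yw]]; exists w; split => //.
  by exists W; split => //; exists Y.
split; first by move=> W FW z Wz; exists W.
by move=> Z _ hZ z [W [FW Wz]]; apply: (hZ W).
Qed.

Definition J1 {U} (R : U -> U -> Prop) x := (boxb R (diaw R [set x]), diab R (diaw R [set x])).
Definition J2 {U} (R : U -> U -> Prop) x := (boxb R [set x], diab R [set x]).

Lemma J1_fwd {U} {R : U -> U -> Prop} (Rr : forall x, R x x) x :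
  cji (DMRS R) (@pair_le U) (J1 R x) -> cji (range (diaw R)) (@subset U) (diaw R [set x]).
Proof.
move=> [_ cj]; split; first by exists [set x].
move=> F' F'D lub.
have lubU : is_lub_in (range (diaw R)) (@subset U) F' [set u | exists W, F' W /\ W u]
  := rng_lub (fun a b => R b a) F' F'D.
have eqx : diaw R [set x] = [set u | exists W, F' W /\ W u].
  apply: sE; first exact: (lub.2.2 _ lubU.1 lubU.2.1).
  exact: (lubU.2.2 _ lub.1 lub.2.1).
set G := [set q | exists W, F' W /\ q = (boxb R W, diab R W)].
have : G (J1 R x).
  apply: cj; first by move=> q [W [_ ->]]; exact: RS_in.
  split; first exact: RS_in.
  split.
    move=> q [W [FW ->]]; have Wx := lub.2.1 W FW.
    by split; [apply: boxb_mono | apply: diab_mono].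
  move=> [C D] [[X1 /= hX1] _] ub; split => z /=.
    move=> hz; rewrite hX1 -boxb_fix -hX1.
    apply: (boxb_mono _ _ _ z hz); rewrite eqx => w [W [FW Ww]].
    have [V _ hV] := F'D W FW.
    have : diaw R (boxb R W) w by rewrite -hV diaw_fix hV.
    apply: diaw_mono.
    exact: (ub (boxb R W, diab R W) (ex_intro _ W (conj FW erefl))).1.
  move=> [w [Rzw xw]]; move: xw; rewrite eqx => -[W [FW Ww]].
  apply: (ub (boxb R W, diab R W) (ex_intro _ W (conj FW erefl))).2.
  by exists w.
move=> [W [FW hW]]; have := congr1 fst hW => /= hb.
have [V _ hV] := F'D W FW.
have -> : diaw R [set x] = W by rewrite -diaw_fix hb -hV diaw_fix.
exact: FW.
Qed.

Lemma J2_fwd {U} {R : U -> U -> Prop} (Rr : forall x, R x x) x : ~ Ssing R x ->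
  cji (DMRS R) (@pair_le U) (J2 R x) -> cji (range (diab R)) (@subset U) (diab R [set x]).
Proof.
move=> nS [_ cj]; split; first by exists [set x].
move=> F' F'D lub.
have lubU := rng_lub R F' F'D.
have eqx : diab R [set x] = [set u | exists W, F' W /\ W u].
  apply: sE; first exact: (lub.2.2 _ lubU.1 lubU.2.1).
  exact: (lubU.2.2 _ lub.1 lub.2.1).
pose G := [set q : set U * set U | exists W, F' W /\ q = (set0, W)].
have : G (J2 R x).
  apply: cj.
    move=> q [W [FW ->]]; split.
      exists set0; apply: sE => z //= hz; exact: hz z (Rr z).
    split; first by have [V _ hV] := F'D W FW; exists V; rewrite /= hV.
    split; first by move=> z [w [_ [v [_ []]]]].
    apply: sE => z /=; first by move=> [[]].
    move=> [Wz Sz]; exfalso; apply: nS.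
    have [w [Rzw wx]] := lub.2.1 W FW z Wz.
    move: Rzw; rewrite (Ss Rr Sz) => wz.
    change (w = x) in wx; change (w = z) in wz; by rewrite -wx wz.
  split; first exact: (RS_in Rr [set x]).
  split.
    move=> q [W [FW ->]]; split => z /=; first by [].
    exact: lub.2.1 W FW z.
  move=> [C D] _ ub; split => z /=.
    by rewrite (boxb1 Rr nS).
  rewrite eqx => -[W [FW Wz]].
  exact: (ub (set0, W) (ex_intro _ W (conj FW erefl))).2 z Wz.
move=> [W [FW hW]]; have := congr1 snd hW => /= ->; exact: FW.
Qed.

Lemma J1_bwd {U} {R : U -> U -> Prop} (Rr : forall x, R x x) x :
  cji (range (diaw R)) (@subset U) (diaw R [set x]) -> cji (DMRS R) (@pair_le U) (J1 R x).
Proof.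
move=> [_ cj]; split; first exact: RS_in.
move=> F FD lub.
set F' := [set W | exists q, F q /\ W = diaw R q.1].
have : F' (diaw R [set x]).
  apply: cj; first by move=> W [q [Fq ->]]; exists q.1.
  split; first by exists [set x].
  split.
    move=> W [q [Fq ->]] w hw; apply: counit.
    exact: diaw_mono _ _ (lub.2.1 q Fq).1 w hw.
  move=> Z _ hZ w hw.
  have le := lub.2.2 (jn R F) (jn_in Rr F FD) (fun q Fq => @jn_ub U R F q Fq).
  have : diaw R (U1 F) w.
    rewrite -diaw_fix; apply: (diaw_mono _ _ le.1); rewrite diaw_fix //.
  move=> [v [Rvw [q [Fq q1v]]]].
  apply: (hZ (diaw R q.1)); first by exists q.
  by exists v.
move=> [q [Fq hq]].
have hqD := FD q Fq; case: q Fq hq hqD => A B Fq /= hq [[X hX] [_ [hsub _]]].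
simpl in hX, hsub.
have eA : A = boxb R (diaw R [set x]) by rewrite hq {2}hX boxb_fix.
have eB : B = diab R (diaw R [set x]).
  apply: sE; first exact: (lub.2.1 _ Fq).2.
  by rewrite hq.
by rewrite /J1 -eA -eB.
Qed.

Lemma J2_bwd {U} {R : U -> U -> Prop} (Rr : forall x, R x x) x : ~ Ssing R x ->
  cji (range (diab R)) (@subset U) (diab R [set x]) -> cji (DMRS R) (@pair_le U) (J2 R x).
Proof.
move=> nS [_ cj]; split; first exact: RS_in.
move=> F FD lub.
set F' := [set W | exists q, F q /\ W = q.2].
have : F' (diab R [set x]).
  apply: cj.
    move=> W [q [Fq ->]]; have [_ [[Y hY] _]] := FD q Fq.
    by exists Y => //; rewrite hY.
  split; first by exists [set x].
  split.
    by move=> W [q [Fq ->]]; exact: (lub.2.1 q Fq).2.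
  move=> Z _ hZ w hw.
  have le := lub.2.2 (jn R F) (jn_in Rr F FD) (fun q Fq => @jn_ub U R F q Fq).
  have [q [Fq q2w]] := le.2 w hw.
  by apply: (hZ q.2); first by exists q.
move=> [q [Fq hq]].
case: q Fq hq => A B Fq /= hq.
have eA : A = boxb R [set x].
  rewrite (boxb1 Rr nS); apply: sE => //.
  by have := (lub.2.1 _ Fq).1; rewrite /J2 (boxb1 Rr nS).
by rewrite /J2 -eA hq.
Qed.

Lemma decomp {U} {R : U -> U -> Prop} (Rr : forall x, R x x) A B : DMRS R (A, B) ->
  exists F, F `<=` DMRS R /\ is_lub_in (DMRS R) (@pair_le U) F (A, B) /\
    forall q, F q -> (exists x, q = J1 R x) \/ (exists y, ~ Ssing R y /\ q = J2 R y).
Proof.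
move=> hD; have [[X hX] [[Y hY] [hsub hS]]] := hD; simpl in hX, hY, hsub, hS.
exists [set q | (exists x, A x /\ q = J1 R x) \/ (exists y, Y y /\ ~ Ssing R y /\ q = J2 R y)].
split; first by move=> q [[x [_ ->]]|[y [_ [_ ->]]]]; exact: RS_in.
split; last by move=> q [[x [_ ->]]|[y [_ [nS ->]]]]; [left; exists x | right; exists y].
split => //; split.
  move=> q [[x [Ax ->]]|[y [Yy [nS ->]]]]; split => /=.
  - have eA : A = boxb R (diaw R A) by rewrite hX boxb_fix.
    rewrite eA; apply: boxb_mono; apply: diaw_mono => z ->; exact: Ax.
  - move=> z hz; apply: hsub; move: hz; apply: diab_mono; apply: diaw_mono => w ->.
    exact: Ax.
  - by rewrite (boxb1 Rr nS).
  - by rewrite hY; apply: diab_mono => z ->.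
move=> [C D] hC ub; split => z /= hz.
  exact: (ub (J1 R z) (or_introl (ex_intro _ z (conj hz erefl)))).1 z (unit_ _ z erefl).
move: hz; rewrite hY => -[y [Rzy Yy]].
case: (pselect (Ssing R y)) => Sy.
  have Ay : A y.
    have : (B `&` Ssing R) y by split => //; rewrite hY; exists y; split => //; exact: Rr.
    by rewrite -hS => -[].
  apply: (ub (J1 R y) (or_introl (ex_intro _ y (conj Ay erefl)))).2.
  exists y; split => //; exists y; split => //; exact: Rr.
apply: (ub (J2 R y) (or_intror (ex_intro _ y (conj Yy (conj Sy erefl))))).2.
by exists y.
Qed.

Theorem mainTheorem2 (U : Type) (R : U -> U -> Prop) (Rrefl : forall x, R x x) :
  cji (DMRS R) (@pair_le U) =
  [set p | (exists x : U,
              cji (range (diaw R)) (@subset U) (diaw R [set x]) /\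
              p = (boxb R (diaw R [set x]), diab R (diaw R [set x])))
        \/ (exists x : U,
              cji (range (diab R)) (@subset U) (diab R [set x]) /\
              ~ Ssing R x /\
              p = (boxb R [set x], diab R [set x]))].
Proof.
apply: sE => p.
  case: p => A B hp; have [F [FD [lub hF]]] := decomp Rrefl _ _ hp.1.
  have := hp.2 F FD lub; move=> /hF [[x e]|[y [nS e]]].
    by left; exists x; split => //; apply: J1_fwd => //; rewrite -e.
  by right; exists y; split => //; apply: J2_fwd => //; rewrite -e.
move=> [[x [hc ->]]|[x [hc [nS ->]]]]; [exact: J1_bwd | exact: J2_bwd].
Qed.
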